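(* Let $f=z(z+\alpha)$ and $A=A(f)$. (1) If $\alpha=0$, every graded simple right $A$-module is isomorphic in $\operatorname{gr}A$ to exactly one of: $X\langle n\rangle$ ($n\in\mathbb{Z}$), $Y\langle n\rangle$ ($n\in\mathbb{Z}$), or $M_\lambda$ ($\lambda\in\Bbbk\setminus\mathbb{Z}$), where $X=A/(xA+zA)$, $Y=(A/(yA+(z-1)A))\langle 1\rangle$, $M_\lambda=A/(z+\lambda)A$. (2) If $\alpha\in\mathbb{Z}_{>0}$, every graded simple right $A$-module is isomorphic to exactly one of: $X\langle n\rangle$, $Y\langle n\rangle$, $Z\langle n\rangle$ ($n\in\mathbb{Z}$), or $M_\lambda$ ($\lambda\in\Bbbk\setminus\mathbb{Z}$), where $X=(A/(xA+(z+\alpha)A))\langle-\alpha\rangle$, $Y=(A/(yA+(z-1)A))\langle1\rangle$, $Z=A/(y^\alpha A+xA+zA)$, $M_\lambda=A/(z+\lambda)A$. (3) If $\alpha\in\Bbbk\setminus\mathbb{Z}$, every graded simple right $A$-module is isomorphic to exactly one of: $X_0\langle n\rangle$, $Y_0\langle n\rangle$, $X_\alpha\langle n\rangle$, $Y_\alpha\langle n\rangle$ ($n\in\mathbb{Z}$), or $M_\lambda$ ($\lambda\in\Bbbk\setminus(\mathbb{Z}\cup(\mathbb{Z}+\alpha))$), where $X_0=A/(xA+zA)$, $Y_0=(A/(yA+(z-1)A))\langle1\rangle$, $X_\alpha=A/(xA+(z+\alpha)A)$, $Y_\alpha=(A/(yA+(z+\alpha-1)A))\langle1\rangle$, $M_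\lambda=A/(z+\lambda)A$.
   Context: $\Bbbk$ is an algebraically closed field of characteristic $0$. Let $\sigma$ be the automorphism of $\Bbbk[z]$ with $\sigma(z)=z+1$. For $\alpha\in\Bbbk$, $f=z(z+\alpha)$ and $A=A(f)$ is the $\Bbbk$-algebra generated by $\Bbbk[z]$, $x$, $y$ with relations $xz=(z+1)x$, $yz=(z-1)y$, $xy=f$, $yx=\sigma^{-1}(f)=(z-1)(z+\alpha-1)$, graded by $\deg x=1,\deg y=-1,\deg z=0$. $\operatorname{gr}A$ is the category of finitely generated $\mathbb{Z}$-graded right $A$-modules with degree-$0$ homomorphisms. For a graded module $M$ the shift $M\langle i\rangle$ is defined by $M\langle i\rangle_j=M_{j-i}$. *)

(* Defs.v *)
From HB Require Import structures.
From mathcomp Require Import all_boot all_order all_algebra.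
Set Implicit Arguments. Unset Strict Implicit. Unset Printing Implicit Defensive.
Import Order.TTheory GRing.Theory Num.Theory.
Local Open Scope ring_scope.

Section GWA.
Variable K : fieldType.
Variable alpha : K.

Definition shiftp (k : int) (p : {poly K}) : {poly K} := p \Po ('X + (k%:~R)%:P).

Definition fpol : {poly K} := 'X * ('X + alpha%:P).

(* Elements of A = A(f), written in normal form  sum_t  (t.2)(z) * w_(t.1),
   where w_n = x^n (n >= 0) and w_n = y^(-n) (n < 0).
   A list represents the (formal) sum of its terms. *)
Definition gwa := seq (int * {poly K}).

Definition gcoef (a : gwa) (n : int) : {poly K} := \sum_(t <- a | t.1 == n) t.2.

(* w_n * w_m = wcoef n m * w_(n+m) *)
Definition wcoef (n m : int) : {poly K} :=
  if (0 <= n) && (0 <= m) then 1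
  else if (n <= 0) && (m <= 0) then 1
  else if 0 < n then
    shiftp (Num.max (n + m) 0) (\prod_(i < minn `|n|%N `|m|%N) shiftp i%:Z fpol)
  else
    shiftp (Num.min (n + m) 0) (\prod_(i < minn `|n|%N `|m|%N) shiftp (- (i.+1)%:Z) fpol).

Definition gmul (a b : gwa) : gwa :=
  [seq (t.1 + s.1, t.2 * shiftp t.1 s.2 * wcoef t.1 s.1) | t <- a, s <- b].

Definition in_rideal (gens : seq gwa) (a : gwa) : Prop :=
  exists ss : seq gwa, size ss = size gens /\
    forall n, gcoef a n = gcoef (flatten [seq gmul rs.1 rs.2 | rs <- zip gens ss]) n.

Definition gx : gwa := [:: (Posz 1%N, 1)].
Definition gy : gwa := [:: (- (Posz 1%N), 1)].
Definition gypow (a : nat) : gwa := [:: (- a%:Z, 1)].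
Definition gzc (c : K) : gwa := [:: (Posz 0%N, 'X + c%:P)].

Definition peval_op (V : lmodType K) (g : V -> V) (p : {poly K}) (v : V) : V :=
  \sum_(i < size p) p`_i *: iter i g v.

(* Z-graded right A(f)-modules: a K-vector space V, homogeneous components
   hom j (j : int) forming a direct sum decomposition of V, and the right
   actions of z, x, y (v |-> v.z, v.x, v.y) *)
Record grmod := GrMod {
  gV : lmodType K;
  ghom : int -> gV -> Prop;
  ghom0 : forall j, ghom j 0;
  ghom_lin : forall j c u v, ghom j u -> ghom j v -> ghom j (c *: u + v);
  gdecomp : forall v, exists s : seq (int * gV),
      uniq (map fst s) /\ (forall t, t \in s -> ghom t.1 t.2) /\ v = \sum_(t <- s) t.2;
  gindep : forall s : seq (int * gV),
      uniq (map fst s) -> (forall t, t \in s -> ghom t.1 t.2) ->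
      \sum_(t <- s) t.2 = 0 -> forall t, t \in s -> t.2 = 0;
  az : gV -> gV;
  ax : gV -> gV;
  ay : gV -> gV;
  az_lin : forall c u v, az (c *: u + v) = c *: az u + az v;
  ax_lin : forall c u v, ax (c *: u + v) = c *: ax u + ax v;
  ay_lin : forall c u v, ay (c *: u + v) = c *: ay u + ay v;
  az_hom : forall j v, ghom j v -> ghom j (az v);
  ax_hom : forall j v, ghom j v -> ghom (j + 1) (ax v);
  ay_hom : forall j v, ghom j v -> ghom (j - 1) (ay v);
  (* xz = (z+1)x,  yz = (z-1)y,  xy = f,  yx = sigma^-1(f) *)
  rel_xz : forall v, az (ax v) = ax (az v + v);
  rel_yz : forall v, az (ay v) = ay (az v - v);
  rel_xy : forall v, ay (ax v) = peval_op az fpol v;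
  rel_yx : forall v, ax (ay v) = peval_op az (shiftp (-1) fpol) v
}.

Variable M : grmod.

Definition actw (n : int) (v : gV M) : gV M :=
  if 0 <= n then iter `|n|%N (@ax M) v else iter `|n|%N (@ay M) v.

Definition act (a : gwa) (v : gV M) : gV M :=
  \sum_(t <- a) actw t.1 (peval_op (@az M) t.2 v).

Definition gsubmod (N : gV M -> Prop) : Prop :=
  N 0 /\ (forall c u v, N u -> N v -> N (c *: u + v)) /\
  (forall v, N v -> N (az v) /\ N (ax v) /\ N (ay v)) /\
  (forall v, N v -> exists s : seq (int * gV M),
      uniq (map fst s) /\ (forall t, t \in s -> ghom t.1 t.2 /\ N t.2) /\
      v = \sum_(t <- s) t.2).

Definition gsimple : Prop :=
  (exists v : gV M, v <> 0) /\
  forall N, gsubmod N -> (forall v, N v -> v = 0) \/ (forall v, N v).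

Definition gfg : Prop :=
  exists s : seq (gV M), (forall v, v \in s -> exists j, ghom j v) /\
    forall v, exists t : seq (gV M * gwa),
      (forall p, p \in t -> p.1 \in s) /\ v = \sum_(p <- t) act p.2 p.1.

(* M is isomorphic in gr A to (A / (r_1 A + ... + r_k A))<n>:
   there is a homogeneous m of degree n such that the degree-0 A-linear map
   A<n> -> M, a |-> m.a, is surjective with kernel r_1 A + ... + r_k A. *)
Definition iso_cyc (gens : seq gwa) (n : int) : Prop :=
  exists m : gV M, ghom n m /\
    (forall v, exists a, v = act a m) /\
    (forall a, act a m = 0 <-> in_rideal gens a).

End GWA.

Definition is_intK (K : fieldType) (c : K) : Prop := exists n : int, c = n%:~R.

Inductive lab1 (K : fieldType) := L1X of int | L1Y of int | L1M of K.
Definition valid1 (K : fieldType) (l : lab1 K) : Prop :=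
  match l with L1M lam => ~ is_intK lam | _ => True end.
Definition iso1 (K : fieldType) (M : grmod 0) (l : lab1 K) : Prop :=
  match l with
  | L1X n => iso_cyc M [:: gx K; gzc 0] n
  | L1Y n => iso_cyc M [:: gy K; gzc (-1)] (n + 1)
  | L1M lam => iso_cyc M [:: gzc lam] 0
  end.

Inductive lab2 (K : fieldType) := L2X of int | L2Y of int | L2Z of int | L2M of K.
Definition valid2 (K : fieldType) (l : lab2 K) : Prop :=
  match l with L2M lam => ~ is_intK lam | _ => True end.
Definition iso2 (K : fieldType) (a : nat) (M : grmod (a%:R : K)) (l : lab2 K) : Prop :=
  match l with
  | L2X n => iso_cyc M [:: gx K; gzc (a%:R)] (n - a%:Z)
  | L2Y n => iso_cyc M [:: gy K; gzc (-1)] (n + 1)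
  | L2Z n => iso_cyc M [:: gypow K a; gx K; gzc 0] n
  | L2M lam => iso_cyc M [:: gzc lam] 0
  end.

Inductive lab3 (K : fieldType) :=
  L3X0 of int | L3Y0 of int | L3Xa of int | L3Ya of int | L3M of K.
Definition valid3 (K : fieldType) (alpha : K) (l : lab3 K) : Prop :=
  match l with L3M lam => ~ is_intK lam /\ ~ is_intK (lam - alpha) | _ => True end.
Definition iso3 (K : fieldType) (alpha : K) (M : grmod alpha) (l : lab3 K) : Prop :=
  match l with
  | L3X0 n => iso_cyc M [:: gx K; gzc 0] n
  | L3Y0 n => iso_cyc M [:: gy K; gzc (-1)] (n + 1)
  | L3Xa n => iso_cyc M [:: gx K; gzc alpha] n
  | L3Ya n => iso_cyc M [:: gy K; gzc (alpha - 1)] (n + 1)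
  | L3M lam => iso_cyc M [:: gzc lam] 0
  end.

(* Main.v *)
Require Import Defs.
From HB Require Import structures.
From mathcomp Require Import all_boot all_order all_algebra.
From mathcomp Require Import zify ring.
From Stdlib Require Import Classical.
Set Implicit Arguments. Unset Strict Implicit. Unset Printing Implicit Defensive.
Import Order.TTheory GRing.Theory Num.Theory.
Local Open Scope ring_scope.

Section Lin.
Variables (K : fieldType) (V : lmodType K) (g : V -> V).
Hypothesis glin : forall c u v, g (c *: u + v) = c *: g u + g v.

Lemma glin0 : g 0 = 0.
Proof.
have H : g 0 = g 0 + g 0 by rewrite -{1}(addr0 0) -{1}(scale1r 0) glin scale1r.
by apply: (addrI (g 0)); rewrite addr0 -H.
Qed.
Lemma glinD u v : g (u + v) = g u + g v.
Proof. by rewrite -{1}(scale1r u) glin scale1r. Qed.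
Lemma glinZ c u : g (c *: u) = c *: g u.
Proof. by rewrite -(addr0 (c *: u)) glin glin0 addr0. Qed.
Lemma glinN u : g (- u) = - g u.
Proof. by rewrite -scaleN1r glinZ scaleN1r. Qed.
Lemma glinB u v : g (u - v) = g u - g v.
Proof. by rewrite glinD glinN. Qed.
Lemma glin_sum I (s : seq I) (P : pred I) (F : I -> V) :
  g (\sum_(i <- s | P i) F i) = \sum_(i <- s | P i) g (F i).
Proof.
elim: s => [|i s IH]; first by rewrite !big_nil glin0.
by rewrite !big_cons; case: (P i); rewrite ?glinD IH.
Qed.
Lemma iter_lin k c u v : iter k g (c *: u + v) = c *: iter k g u + iter k g v.
Proof. by elim: k => //= k ->; rewrite glin. Qed.
Lemma giterD k u v : iter k g (u + v) = iter k g u + iter k g v.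
Proof. by rewrite -{1}(scale1r u) iter_lin scale1r. Qed.
Lemma giter0 k : iter k g 0 = 0.
Proof. by elim: k => //= k ->; rewrite glin0. Qed.
Lemma giterZ k c u : iter k g (c *: u) = c *: iter k g u.
Proof. by rewrite -(addr0 (c *: u)) iter_lin giter0 addr0. Qed.
End Lin.

Section Peval.
Variables (K : fieldType) (V : lmodType K) (g : V -> V).
Hypothesis glin : forall c u v, g (c *: u + v) = c *: g u + g v.
Local Notation pv := (peval_op g).

Lemma peval_sz (N : nat) (p : {poly K}) (v : V) : (size p <= N)%N ->
  pv p v = \sum_(i < N) p`_i *: iter i g v.
Proof.
move=> HN; rewrite /peval_op (big_ord_widen N (fun i => p`_i *: iter i g v)) //.
rewrite big_mkcond; apply: eq_bigr => i _; case: ifP => // /negbT.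
by rewrite -leqNgt => Hi; rewrite nth_default // scale0r.
Qed.

Lemma peval0 (v : V) : pv 0 v = 0.
Proof. by rewrite /peval_op size_poly0 big_ord0. Qed.

Lemma pevalD p q (v : V) : pv (p + q) v = pv p v + pv q v.
Proof.
pose N := maxn (size p) (size q).
rewrite (@peval_sz N) ?size_polyD // (@peval_sz N p) ?leq_maxl //.
rewrite (@peval_sz N q) ?leq_maxr // -big_split /=.
by apply: eq_bigr => i _; rewrite coefD scalerDl.
Qed.

Lemma pevalZ c p (v : V) : pv (c *: p) v = c *: pv p v.
Proof.
rewrite (@peval_sz (size p)) ?size_scale_leq // /peval_op scaler_sumr.
by apply: eq_bigr => i _; rewrite coefZ scalerA.
Qed.

Lemma pevalN p (v : V) : pv (- p) v = - pv p v.
Proof. by rewrite -(scaleN1r p) pevalZ scaleN1r. Qed.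

Lemma pevalB p q (v : V) : pv (p - q) v = pv p v - pv q v.
Proof. by rewrite pevalD pevalN. Qed.

Lemma pevalMX p (v : V) : pv (p * 'X) v = pv p (g v).
Proof.
rewrite (@peval_sz (size p).+1); last first.
  by case: (eqVneq p 0) => [->|pn0]; rewrite ?mul0r ?size_poly0 // size_mulX.
rewrite big_ord_recl coefMX /= scale0r add0r /peval_op.
apply: eq_bigr => i _; rewrite coefMX /=. by rewrite add0n -iterS iterSr.
Qed.

Lemma pevalC c (v : V) : pv c%:P v = c *: v.
Proof.
rewrite (@peval_sz 1) ?size_polyC ?leq_b1 // big_ord1 /=.
by rewrite coefC.
Qed.

Lemma peval1 v : pv 1 v = v.
Proof. by rewrite pevalC scale1r. Qed.

Lemma pevalX v : pv 'X v = g v.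
Proof. by rewrite -(mul1r 'X) pevalMX peval1. Qed.

Lemma peval_lin p c u (v : V) : pv p (c *: u + v) = c *: pv p u + pv p v.
Proof.
rewrite /peval_op scaler_sumr -big_split /=; apply: eq_bigr => i _.
by rewrite iter_lin // scalerDr !scalerA mulrC.
Qed.

Lemma pevalDv p (u v : V) : pv p (u + v) = pv p u + pv p v.
Proof. by rewrite -{1}(scale1r u) peval_lin scale1r. Qed.
Lemma pevalv0 p : pv p (0 : V) = 0.
Proof. by rewrite /peval_op big1 // => i _; rewrite giter0 // scaler0. Qed.
Lemma pevalZv p c (u : V) : pv p (c *: u) = c *: pv p u.
Proof. by rewrite -(addr0 (c *: u)) peval_lin pevalv0 addr0. Qed.
Lemma peval_comm p (v : V) : g (pv p v) = pv p (g v).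
Proof.
rewrite /peval_op (glin_sum glin); apply: eq_bigr => i _.
by rewrite (glinZ glin) -iterS iterSr.
Qed.

Lemma pevalM p q (v : V) : pv (p * q) v = pv p (pv q v).
Proof.
elim/poly_ind: p q v => [|p c IH] q v; first by rewrite mul0r !peval0.
rewrite mulrDl pevalD -mulrA (mulrC 'X) IH mul_polyC pevalZ.
by rewrite pevalD pevalMX pevalC pevalMX peval_comm.
Qed.

Lemma peval_eig mu p (v : V) : g v = mu *: v -> pv p v = p.[mu] *: v.
Proof.
move=> Hv; have Hi : forall i, iter i g v = mu ^+ i *: v.
  elim=> [|i IH] /=; first by rewrite scale1r.
  by rewrite IH (glinZ glin) Hv scalerA exprS mulrC.
rewrite /peval_op horner_coef scaler_suml; apply: eq_bigr => i _.
by rewrite Hi scalerA.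
Qed.

End Peval.

Section Shift.
Variable K : fieldType.
Implicit Types p q : {poly K}.

Lemma shiftpE (k : int) p : shiftp k p = p \Po ('X + (k%:~R)%:P).
Proof. by []. Qed.

Lemma horner_shiftp (k : int) p (x : K) : (shiftp k p).[x] = p.[x + k%:~R].
Proof. by rewrite /shiftp horner_comp !hornerE. Qed.

Lemma shiftp_comp (a b : int) p : shiftp a (shiftp b p) = shiftp (a + b) p.
Proof.
rewrite /shiftp -comp_polyA comp_polyD comp_polyX comp_polyC -addrA -polyCD.
by rewrite intrD addrC.
Qed.

Lemma shiftp0 p : shiftp 0 p = p.
Proof. by rewrite /shiftp /= addr0 comp_polyXr. Qed.

Lemma shiftpK (a : int) p : shiftp (- a) (shiftp a p) = p.
Proof. by rewrite shiftp_comp addNr shiftp0. Qed.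

Lemma shiftpKV (a : int) p : shiftp a (shiftp (- a) p) = p.
Proof. by rewrite shiftp_comp addrN shiftp0. Qed.

Lemma shiftpM (a : int) p q : shiftp a (p * q) = shiftp a p * shiftp a q.
Proof. by rewrite /shiftp comp_polyM. Qed.

Lemma shiftpC (a : int) (c : K) : shiftp a c%:P = c%:P.
Proof. by rewrite /shiftp comp_polyC. Qed.

Lemma shiftp1 (a : int) : shiftp a 1 = 1 :> {poly K}.
Proof. by rewrite /shiftp comp_polyC. Qed.

Lemma shiftpX (a : int) : shiftp a (K:=K) 'X = 'X + (a%:~R)%:P.
Proof. by rewrite /shiftp comp_polyX. Qed.

End Shift.

Section Mod.
Variables (K : fieldType) (alpha : K) (M : grmod alpha).
Local Notation V := (gV M).
Local Notation pv := (peval_op (@az _ _ M)).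
Local Notation f := (fpol alpha).

Let zlin := @az_lin _ _ M.
Let xlin := @ax_lin _ _ M.
Let ylin := @ay_lin _ _ M.

Lemma ghomD j (u v : V) : ghom j u -> ghom j v -> ghom j (u + v).
Proof. by move=> Hu Hv; rewrite -(scale1r u); apply: ghom_lin. Qed.
Lemma ghomZ j c (u : V) : ghom j u -> ghom j (c *: u).
Proof. by move=> Hu; rewrite -(addr0 (c *: u)); apply: ghom_lin => //; apply: ghom0. Qed.
Lemma ghom_sum j I (s : seq I) (P : pred I) (F : I -> V) :
  (forall i, P i -> ghom j (F i)) -> ghom j (\sum_(i <- s | P i) F i).
Proof.
move=> H; elim: s => [|i s IH]; first by rewrite big_nil; apply: ghom0.
by rewrite big_cons; case: ifP => // Pi; apply: ghomD => //; apply: H.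
Qed.

Lemma peval_hom j p (v : V) : ghom j v -> ghom j (pv p v).
Proof.
move=> Hv; rewrite /peval_op; apply: ghom_sum => i _; apply: ghomZ.
move: (i : nat); elim => //= k IH; exact: az_hom.
Qed.

Lemma iter_ax_hom j k (v : V) : ghom j v -> ghom (j + k%:Z) (iter k (@ax _ _ M) v).
Proof.
move=> Hv; elim: k => [|k IH] /=; first by rewrite addr0.
by rewrite -[k.+1]addn1 PoszD addrA; apply: ax_hom.
Qed.

Lemma iter_ay_hom j k (v : V) : ghom j v -> ghom (j - k%:Z) (iter k (@ay _ _ M) v).
Proof.
move=> Hv; elim: k => [|k IH] /=; first by rewrite subr0.
by rewrite -[k.+1]addn1 PoszD opprD addrA; apply: ay_hom.
Qed.

Lemma actwP (k : nat) (v : V) : actw (Posz k) v = iter k (@ax _ _ M) v.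
Proof. by []. Qed.
Lemma actwN (k : nat) (v : V) : actw (Negz k) v = iter k.+1 (@ay _ _ M) v.
Proof. by []. Qed.

Lemma actw_hom j n (v : V) : ghom j v -> ghom (j + n) (actw n v).
Proof.
case: n => k Hv; first by rewrite actwP; apply: iter_ax_hom.
by rewrite actwN NegzE; apply: iter_ay_hom.
Qed.

Lemma actw_lin n c (u v : V) : actw n (c *: u + v) = c *: actw n u + actw n v.
Proof. by case: n => k; rewrite ?actwP ?actwN iter_lin. Qed.

Lemma actw0 n : actw n (0 : V) = 0.
Proof. exact: (glin0 (@actw_lin n)). Qed.

Lemma az_iter_ax k (u : V) :
  az (iter k (@ax _ _ M) u) = iter k (@ax _ _ M) (az u + k%:R *: u).
Proof.
elim: k => [|k IH] /=; first by rewrite scale0r addr0.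
rewrite rel_xz IH -(giterD xlin).
by rewrite -natr1 scalerDl scale1r addrA.
Qed.

Lemma az_iter_ay k (u : V) :
  az (iter k (@ay _ _ M) u) = iter k (@ay _ _ M) (az u - k%:R *: u).
Proof.
elim: k => [|k IH] /=; first by rewrite scale0r subr0.
rewrite rel_yz IH -(glinN (iter_lin ylin k)) -(giterD ylin).
by rewrite -natr1 scalerDl scale1r opprD addrA.
Qed.

Lemma az_actw n (u : V) : az (actw n u) = actw n (az u + n%:~R *: u).
Proof.
case: n => k; first by rewrite !actwP az_iter_ax.
by rewrite !actwN az_iter_ay NegzE mulrNz scaleNr.
Qed.

Lemma comm_gen (h : V -> V) (d : K) :
  (forall c u v, h (c *: u + v) = c *: h u + h v) ->
  (forall u, az (h u) = h (az u + d *: u)) ->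
  forall p u, pv p (h u) = h (pv (p \Po ('X + d%:P)) u).
Proof.
move=> hlin hz p; elim/poly_ind: p => [|p c IH] u.
  by rewrite comp_poly0 !peval0 (glin0 hlin).
rewrite pevalD // pevalMX // pevalC // hz IH comp_polyD comp_polyM comp_polyX.
rewrite comp_polyC mulrDr (mulrC _ (d%:P)) mul_polyC !pevalD // pevalMX // pevalZ // pevalC //.
by rewrite pevalDv // pevalZv // [in RHS](glinD hlin) (glinZ hlin).
Qed.

Lemma peval_actw n p (u : V) : pv p (actw n u) = actw n (pv (shiftp n p) u).
Proof. by apply: comm_gen => //; [apply: actw_lin | apply: az_actw]. Qed.

Lemma peval_ax p (u : V) : pv p (ax u) = ax (pv (shiftp 1 p) u).
Proof. by have := peval_actw 1 p u; rewrite !actwP. Qed.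

Lemma peval_ay p (u : V) : pv p (ay u) = ay (pv (shiftp (-1) p) u).
Proof. by have := peval_actw (-1) p u; rewrite -[-1]/(Negz 0) !actwN. Qed.

End Mod.

Lemma NegzS1 (k : nat) : Negz k.+1 + 1 = Negz k.
Proof. by rewrite !NegzE -addn1 PoszD opprD addrNK. Qed.
Lemma PoszS1 (k : nat) : Posz k.+1 - 1 = Posz k.
Proof. by rewrite -addn1 PoszD addrK. Qed.
Lemma NegzB1 (k : nat) : Negz k - 1 = Negz k.+1.
Proof. by rewrite !NegzE -opprD -PoszD addn1. Qed.
Lemma PoszD1 (k : nat) : Posz k + 1 = Posz k.+1.
Proof. by rewrite -PoszD addn1. Qed.

Section Gcoef.
Variable K : fieldType.
Implicit Types a b : gwa K.

Lemma gcoef_nil n : gcoef ([::] : gwa K) n = 0.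
Proof. by rewrite /gcoef big_nil. Qed.
Lemma gcoef_cons t a n : gcoef (t :: a) n = (if t.1 == n then t.2 else 0) + gcoef a n.
Proof. by rewrite /gcoef big_cons; case: ifP; rewrite ?add0r. Qed.
Lemma gcoef_cat a b n : gcoef (a ++ b) n = gcoef a n + gcoef b n.
Proof. by rewrite /gcoef big_cat. Qed.
Lemma gcoef_notin a n : n \notin map fst a -> gcoef a n = 0.
Proof.
move=> Hn; rewrite /gcoef big_seq_cond big1 // => t /andP [ta /eqP tn].
by move: Hn; rewrite -tn map_f.
Qed.
Lemma gcoef_map (S : seq int) (G : int -> {poly K}) n : uniq S ->
  gcoef [seq (j, G j) | j <- S] n = if n \in S then G n else 0.
Proof.
elim: S => [|j S IH] /=; first by rewrite gcoef_nil.
case/andP=> jS uS; rewrite gcoef_cons IH // in_cons /=.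
case: (eqVneq j n) => [<-|jn] /=; last by rewrite add0r.
by rewrite (negbTE jS) addr0.
Qed.

Lemma group_sum (V : zmodType) (F : int -> {poly K} -> V) a (S : seq int) :
  (forall j, F j 0 = 0) -> (forall j p q, F j (p + q) = F j p + F j q) ->
  uniq S -> {subset map fst a <= S} ->
  \sum_(t <- a) F t.1 t.2 = \sum_(j <- S) F j (gcoef a j).
Proof.
move=> F0 FD uS; elim: a => [|t a IH] sub /=.
  by rewrite big_nil big1 // => j _; rewrite gcoef_nil F0.
rewrite big_cons IH; last by move=> x xa; apply: sub; rewrite in_cons xa orbT.
under [in RHS]eq_bigr => j _ do rewrite gcoef_cons FD.
rewrite big_split /=; congr (_ + _).
have tS : t.1 \in S by apply: sub; rewrite in_cons eqxx.
rewrite (bigD1_seq t.1) //= eqxx big1 ?addr0 // => j jt.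
by rewrite eq_sym (negbTE jt) F0.
Qed.

End Gcoef.

Section Act.
Variables (K : fieldType) (alpha : K) (M : grmod alpha).
Local Notation V := (gV M).
Local Notation pv := (peval_op (@az _ _ M)).
Local Notation f := (fpol alpha).
Let zlin := @az_lin _ _ M.
Let xlin := @ax_lin _ _ M.
Let ylin := @ay_lin _ _ M.
Implicit Types a b : gwa K.

Lemma act_nil (w : V) : act [::] w = 0.
Proof. by rewrite /act big_nil. Qed.
Lemma act_cons t a (w : V) : act (t :: a) w = actw t.1 (pv t.2 w) + act a w.
Proof. by rewrite /act big_cons. Qed.
Lemma act_cat a b (w : V) : act (a ++ b) w = act a w + act b w.
Proof. by rewrite /act big_cat. Qed.
Lemma act0 a : act a (0 : V) = 0.
Proof. by rewrite /act big1 // => t _; rewrite pevalv0 // actw0. Qed.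
Lemma act1 (w : V) : act [:: (0, 1)] w = w.
Proof. by rewrite act_cons act_nil addr0 peval1. Qed.

Lemma act_group a (w : V) (S : seq int) : uniq S -> {subset map fst a <= S} ->
  act a w = \sum_(j <- S) actw j (pv (gcoef a j) w).
Proof.
move=> uS sub; rewrite /act (@group_sum _ _ (fun j p => actw j (pv p w)) a S) //.
  by move=> j; rewrite peval0 actw0.
by move=> j p q; rewrite pevalD -{1}(scale1r (pv p w)) actw_lin scale1r.
Qed.

Lemma act_scale c a (w : V) : act [seq (t.1, c *: t.2) | t <- a] w = c *: act a w.
Proof.
rewrite /act big_map scaler_sumr; apply: eq_bigr => t _ /=.
by rewrite pevalZ -(addr0 (c *: _)) actw_lin actw0 addr0.
Qed.

Lemma az_act a (w : V) :
  az (act a w) = act [seq (t.1, shiftp t.1 'X * t.2) | t <- a] w.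
Proof.
rewrite /act big_map (glin_sum zlin); apply: eq_bigr => t _ /=.
by rewrite -pevalX // peval_actw pevalM.
Qed.

Definition xcoef (j : int) : {poly K} := if 0 <= j then 1 else shiftp j f.
Definition ycoef (j : int) : {poly K} := if 0 < j then shiftp (j - 1) f else 1.

Lemma ax_actw j (u : V) : ax (actw j u) = actw (j + 1) (pv (xcoef j) u).
Proof.
rewrite /xcoef; case: j => k /=.
  by rewrite peval1 PoszD1 !actwP.
rewrite actwN /= rel_yx.
have -> : iter k (@ay _ _ M) u = actw (Negz k + 1) u.
  by case: k => [|k] //; rewrite NegzS1 actwN.
by rewrite peval_actw shiftp_comp addrK.
Qed.

Lemma ay_actw j (u : V) : ay (actw j u) = actw (j - 1) (pv (ycoef j) u).
Proof.
rewrite /ycoef; case: j => [[|k]|k] /=.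
- by rewrite peval1.
- by rewrite actwP /= rel_xy PoszS1 -actwP peval_actw.
- by rewrite peval1 NegzB1 !actwN.
Qed.

Lemma ax_act a (w : V) :
  ax (act a w) = act [seq (t.1 + 1, xcoef t.1 * t.2) | t <- a] w.
Proof.
rewrite /act big_map (glin_sum xlin); apply: eq_bigr => t _ /=.
by rewrite ax_actw pevalM.
Qed.

Lemma ay_act a (w : V) :
  ay (act a w) = act [seq (t.1 - 1, ycoef t.1 * t.2) | t <- a] w.
Proof.
rewrite /act big_map (glin_sum ylin); apply: eq_bigr => t _ /=.
by rewrite ay_actw pevalM.
Qed.

Definition Ngen (w : V) := fun v : V => exists a, v = act a w.

Lemma Ngen_gsub n (w : V) : ghom n w -> gsubmod (Ngen w).
Proof.
move=> Hw; split; first by exists [::]; rewrite act_nil.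
split.
  move=> c u v [a ->] [b ->]; exists ([seq (t.1, c *: t.2) | t <- a] ++ b).
  by rewrite act_cat act_scale.
split.
  move=> v [a ->]; split; first by eexists; apply: az_act.
  by split; eexists; [apply: ax_act | apply: ay_act].
move=> v [a ->].
pose S := undup (map fst a).
exists [seq (n + j, actw j (pv (gcoef a j) w)) | j <- S]; split.
  rewrite -map_comp; rewrite (map_inj_uniq (addrI n)) ?undup_uniq //.
split.
  move=> t /mapP [j jS ->] /=; split; first by apply: actw_hom; apply: peval_hom.
  by exists [:: (j, gcoef a j)]; rewrite act_cons act_nil addr0.
rewrite big_map; apply: act_group; first exact: undup_uniq.
by move=> x; rewrite mem_undup.
Qed.

Lemma component n j a (w v : V) : ghom n w -> v = act a w -> ghom (n + j) v ->
  v = actw j (pv (gcoef a j) w).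
Proof.
move=> Hw Hv Hvj.
pose S := undup (j :: map fst a).
have uS : uniq S by apply: undup_uniq.
have jS : j \in S by rewrite mem_undup in_cons eqxx.
pose C i := actw i (pv (gcoef a i) w).
have HA : v = \sum_(i <- S) C i.
  by rewrite Hv; apply: act_group => // x xa; rewrite mem_undup in_cons xa orbT.
pose s := [seq (n + i, C i - (if i == j then v else 0)) | i <- S].
have := @gindep _ _ M s.
have us : uniq (map fst s) by rewrite -map_comp (map_inj_uniq (addrI n)).
have hs : forall t, t \in s -> ghom t.1 t.2.
  move=> t /mapP [i iS ->] /=; apply: ghomD; first by apply: actw_hom; apply: peval_hom.
  rewrite -scaleN1r; apply: ghomZ; case: eqP => [->|_] //; exact: ghom0.
have s0 : \sum_(t <- s) t.2 = 0.
  rewrite big_map sumrB -HA (bigD1_seq j) //= eqxx big1 ?addr0 ?subrr //.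
  by move=> i /negbTE ->.
move=> /(_ us hs s0 (n + j, C j - v)) /=.
have -> : (n + j, C j - v) \in s by apply/mapP; exists j => //; rewrite eqxx.
by move=> /(_ isT) /eqP; rewrite subr_eq0 => /eqP.
Qed.

Lemma gen_all n (w : V) : gsimple M -> ghom n w -> w <> 0 -> forall v, exists a, v = act a w.
Proof.
move=> [_ Hs] Hw w0 v.
case: (Hs _ (Ngen_gsub Hw)) => [H|H]; last by apply: H.
by exfalso; apply: w0; apply: H; exists [:: (0, 1)]; rewrite act1.
Qed.

Lemma act_eig mu a (w : V) : az w = mu *: w ->
  act a w = \sum_(t <- a) t.2.[mu] *: actw t.1 w.
Proof.
move=> Hw; rewrite /act; apply: eq_bigr => t _.
by rewrite (peval_eig zlin _ Hw) -(addr0 (_ *: w)) actw_lin actw0 addr0.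
Qed.

Lemma actw_eig mu j (w : V) : az w = mu *: w ->
  az (actw j w) = (mu + j%:~R) *: actw j w.
Proof.
move=> Hw; rewrite az_actw Hw -scalerDl -(addr0 (_ *: w)) actw_lin actw0 addr0.
by [].
Qed.

End Act.

Section Eig.
Variables (K : fieldType) (alpha : K) (M : grmod alpha).
Local Notation V := (gV M).
Local Notation pv := (peval_op (@az _ _ M)).
Local Notation f := (fpol alpha).
Let zlin := @az_lin _ _ M.
Let xlin := @ax_lin _ _ M.
Let ylin := @ay_lin _ _ M.
Implicit Types a b : gwa K.

Lemma horner_f (x : K) : f.[x] = x * (x + alpha).
Proof. by rewrite /fpol !hornerE. Qed.

Lemma act_kernel n mu (w : V) a : ghom n w -> az w = mu *: w ->
  act a w = 0 <-> forall j, (gcoef a j).[mu] *: actw j w = 0.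
Proof.
move=> Hw Hmu; split.
  move=> H0 j; have := @component _ _ M n j a w 0 Hw (esym H0) (ghom0 _ _).
  by rewrite (peval_eig zlin _ Hmu) -(addr0 (_ *: w)) actw_lin actw0 addr0.
move=> H; rewrite (@act_group _ _ _ a w (undup (map fst a))) ?undup_uniq //; last first.
  by move=> x; rewrite mem_undup.
rewrite big1 // => j _; rewrite (peval_eig zlin _ Hmu).
by rewrite -(addr0 (_ *: w)) actw_lin actw0 addr0.
Qed.

Lemma az_iter_ax_eig nu k (u : V) : az u = nu *: u ->
  az (iter k (@ax _ _ M) u) = (nu + k%:R) *: iter k (@ax _ _ M) u.
Proof. by move=> H; rewrite az_iter_ax H -scalerDl giterZ. Qed.

Lemma az_iter_ay_eig nu k (u : V) : az u = nu *: u ->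
  az (iter k (@ay _ _ M) u) = (nu - k%:R) *: iter k (@ay _ _ M) u.
Proof. by move=> H; rewrite az_iter_ay H -scalerBl giterZ. Qed.

Lemma iter_ax_nz nu k (u : V) : u <> 0 -> az u = nu *: u ->
  (forall i, (i < k)%N -> f.[nu + i%:R] <> 0) -> iter k (@ax _ _ M) u <> 0.
Proof.
move=> u0 Hu; elim: k => [|k IH] Hf //=.
have IH' := IH (fun i Hi => Hf i (ltnW Hi)).
move=> H0; have := rel_xy (iter k (@ax _ _ M) u); rewrite H0 (glin0 ylin).
rewrite (peval_eig zlin _ (az_iter_ax_eig _ Hu)) => /esym /eqP.
by rewrite scaler_eq0 => /orP [/eqP /(Hf k (ltnSn k))|/eqP].
Qed.

Lemma iter_ay_nz nu k (u : V) : u <> 0 -> az u = nu *: u ->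
  (forall i, (i < k)%N -> f.[nu - i%:R - 1] <> 0) -> iter k (@ay _ _ M) u <> 0.
Proof.
move=> u0 Hu; elim: k => [|k IH] Hf //=.
have IH' := IH (fun i Hi => Hf i (ltnW Hi)).
move=> H0; have := rel_yx (iter k (@ay _ _ M) u); rewrite H0 (glin0 xlin).
rewrite (peval_eig zlin _ (az_iter_ay_eig _ Hu)) horner_shiftp => /esym /eqP.
by rewrite scaler_eq0 => /orP [/eqP /(Hf k (ltnSn k))|/eqP].
Qed.

Lemma reach n j (w u : V) mu : gsimple M -> w <> 0 -> ghom n w -> az w = mu *: w ->
  u <> 0 -> ghom (n + j) u -> actw j w <> 0.
Proof.
move=> Hs w0 Hw Hmu u0 Hu H0.
have [a Ha] := gen_all Hs Hw w0 u.
have := component Hw Ha Hu; rewrite (peval_eig zlin _ Hmu).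
by rewrite -(addr0 (_ *: w)) actw_lin actw0 addr0 H0 scaler0.
Qed.

Lemma killx d nu (u : V) : gsimple M -> u <> 0 -> ghom d u -> az u = nu *: u ->
  f.[nu] = 0 -> ax u = 0.
Proof.
move=> Hs u0 Hu Hnu Hf; case: (eqVneq (ax u) 0) => // /eqP w0; exfalso.
have Hw : ghom (d + 1) (ax u) by apply: ax_hom.
have Hz : az (ax u) = (nu + 1) *: ax u.
  by rewrite rel_xz Hnu -{2}(scale1r u) -scalerDl (glinZ xlin).
have Hu' : ghom (d + 1 + -1) u by rewrite addrK.
apply: (reach Hs w0 Hw Hz u0 Hu').
by rewrite -[-1]/(Negz 0) actwN /= rel_xy (peval_eig zlin _ Hnu) Hf scale0r.
Qed.

Lemma killy d nu (u : V) : gsimple M -> u <> 0 -> ghom d u -> az u = nu *: u ->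
  f.[nu - 1] = 0 -> ay u = 0.
Proof.
move=> Hs u0 Hu Hnu Hf; case: (eqVneq (ay u) 0) => // /eqP w0; exfalso.
have Hw : ghom (d - 1) (ay u) by apply: ay_hom.
have Hz : az (ay u) = (nu - 1) *: ay u.
  by rewrite rel_yz Hnu -{2}(scale1r u) -scalerBl (glinZ ylin).
have Hu' : ghom (d - 1 + 1) u by rewrite subrK.
apply: (reach Hs w0 Hw Hz u0 Hu').
rewrite -[1]/(Posz 1) actwP /= rel_yx (peval_eig zlin _ Hnu) horner_shiftp.
by rewrite [(-1)%:~R]/= Hf scale0r.
Qed.

Lemma killZ d (a : nat) (u : V) : gsimple M -> u <> 0 -> ghom d u -> az u = 0 *: u ->
  ax u = 0 -> f.[- a%:R] = 0 -> (0 < a)%N -> iter a (@ay _ _ M) u = 0.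
Proof.
move=> Hs u0 Hu Hnu Hx Hf a0; case: (eqVneq (iter a (@ay _ _ M) u) 0) => // /eqP w0; exfalso.
have Hw : ghom (d - a%:Z) (iter a (@ay _ _ M) u) by apply: iter_ay_hom.
have Hz := az_iter_ay_eig a Hnu; rewrite sub0r in Hz.
have Hx' := killx Hs w0 Hw Hz Hf.
have Hu' : ghom (d - a%:Z + a%:Z) u by rewrite subrK.
apply: (reach Hs w0 Hw Hz u0 Hu').
by rewrite actwP; case: a a0 {Hw Hz Hf w0 Hu'} Hx' => // a _ Hx'; rewrite iterSr Hx' giter0.
Qed.

Lemma nonzero_hom (v : V) : v <> 0 -> exists d (u : V), u <> 0 /\ ghom d u.
Proof.
move=> v0; have [s [_ [Hs Hv]]] := gdecomp v.
case: (boolP (all (fun t => t.2 == 0) s)) => [/allP Hall|].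
  by exfalso; apply: v0; rewrite Hv big1_seq // => t ts; apply/eqP; apply: Hall.
case/allPn => t ts /eqP t0; exists t.1, t.2; split => //; exact: Hs.
Qed.

End Eig.

Section Closed.
Variables (K : closedFieldType) (alpha : K) (M : grmod alpha).
Local Notation V := (gV M).
Local Notation pv := (peval_op (@az _ _ M)).
Let zlin := @az_lin _ _ M.

Lemma eig_of_roots d (rs : seq K) (v : V) : v <> 0 -> ghom d v ->
  pv (\prod_(z <- rs) ('X - z%:P)) v = 0 ->
  exists (u : V) mu, u <> 0 /\ ghom d u /\ az u = mu *: u.
Proof.
elim: rs v => [|z rs IH] v v0 Hv; first by rewrite big_nil peval1.
rewrite big_cons pevalM //.
case: (eqVneq (pv (\prod_(j <- rs) ('X - j%:P)) v) 0) => [H0|H0] H.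
  by apply: (IH v).
exists (pv (\prod_(j <- rs) ('X - j%:P)) v), z; split; first by apply/eqP.
split; first by apply: peval_hom.
by move: H; rewrite pevalB // pevalX // pevalC // => /eqP; rewrite subr_eq0 => /eqP.
Qed.

Lemma exists_eig : gsimple M -> exists (u : V) d mu, u <> 0 /\ ghom d u /\ az u = mu *: u.
Proof.
move=> Hs; have [[v0 v00] _] := Hs.
have [d [v [v0n Hv]]] := nonzero_hom v00.
case: (eqVneq (az v) 0) => [Hz|Hz].
  by exists v, d, 0; rewrite scale0r.
have Hw : ghom d (az v) by apply: az_hom.
have [a Ha] := gen_all Hs Hw (elimN eqP Hz) v.
have := component (j := 0) Hw Ha; rewrite addr0 => /(_ Hv) Hv'.
rewrite -[0]/(Posz 0) actwP /= -pevalMX // in Hv'.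
set g := 1 - gcoef a 0 * 'X.
have Hg : pv g v = 0 by rewrite pevalB // peval1 -Hv' subrr.
have g0 : g != 0.
  apply/eqP => g0; have := congr1 (fun p => p.[0]) g0.
  by rewrite /g !hornerE subr0 => /eqP; rewrite oner_eq0.
have [rs Hrs] := closed_field_poly_normal g.
move: Hg; rewrite Hrs pevalZ // => /eqP; rewrite scaler_eq0 lead_coef_eq0 (negbTE g0) /=.
move=> /eqP H; have [u [mu [? [? ?]]]] := eig_of_roots v0n Hv H.
by exists u, d, mu.
Qed.

End Closed.

Section Ideal.
Variables (K : fieldType) (alpha : K).
Local Notation f := (fpol alpha).
Implicit Types a b : gwa K.

Lemma gmul_single (t : int * {poly K}) (s : gwa K) :
  gmul alpha [:: t] s = [seq (t.1 + u.1, t.2 * shiftp t.1 u.2 * wcoef alpha t.1 u.1) | u <- s].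
Proof. by rewrite /gmul /= cats0. Qed.

Lemma gmul_nil (g : gwa K) : gmul alpha g [::] = [::].
Proof. by elim: g. Qed.

Lemma gcoef_gmul_map (k : int) (p : {poly K}) (S : seq int) (F : int -> {poly K}) n :
  uniq S ->
  gcoef (gmul alpha [:: (k, p)] [seq (j - k, F j) | j <- S]) n =
  if n \in S then p * shiftp k (F n) * wcoef alpha k (n - k) else 0.
Proof.
move=> uS; rewrite gmul_single -map_comp /=.
have -> : [seq (k + (j - k), p * shiftp k (F j) * wcoef alpha k (j - k)) | j <- S] =
          [seq (j, p * shiftp k (F j) * wcoef alpha k (j - k)) | j <- S].
  by apply: eq_map => j /=; rewrite addrC subrK.
by rewrite gcoef_map.
Qed.

Lemma wcoef_pp (m n : int) : 0 <= m -> 0 <= n -> wcoef alpha m n = 1.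
Proof. by move=> Hm Hn; rewrite /wcoef Hm Hn. Qed.

Lemma wcoef_nn (m n : int) : m <= 0 -> n <= 0 -> wcoef alpha m n = 1.
Proof.
move=> Hm Hn; rewrite /wcoef Hm Hn /=.
by case: ifP => // /andP [H1 H2]; rewrite (@le_anti _ _ m 0) ?H1 ?Hm.
Qed.

Lemma wcoef_0 (k : int) : wcoef alpha k 0 = 1.
Proof.
by case: (lerP 0 k) => H; [apply: wcoef_pp | apply: wcoef_nn => //; apply: ltW].
Qed.

Lemma wcoef_1N (k : nat) : wcoef alpha 1 (Negz k) = f.
Proof.
rewrite /wcoef /=; have -> : minn 1 k.+1 = 1%N by apply/minn_idPl.
by rewrite max_r ?big_ord1 ?shiftp0 //; rewrite NegzE; lia.
Qed.

Lemma wcoef_N1P (k : nat) : wcoef alpha (-1) (Posz k.+1) = shiftp (-1) f.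
Proof.
rewrite /wcoef /=; have -> : minn 1 k.+1 = 1%N by apply/minn_idPl.
by rewrite min_r ?big_ord1 ?shiftp0 //; lia.
Qed.

Lemma wcoef_NaP_eval (a k : nat) :
  f.[- (a.+1)%:R] = 0 -> (wcoef alpha (Negz a) (Posz k.+1)).[0] = 0.
Proof.
move=> Hf; rewrite /wcoef /=.
have [N HN] : exists N, minn a.+1 k.+1 = N.+1.
  by exists (minn a.+1 k.+1).-1; rewrite prednK // leq_min.
rewrite HN horner_shiftp horner_prod big_ord_recr /= horner_shiftp.
have -> : 0 + (Num.min (Negz a + Posz k.+1) 0)%:~R + (- (N.+1)%:Z)%:~R =
          ((Num.min (Negz a + Posz k.+1) 0) - (N.+1)%:Z)%:~R :> K.
  by rewrite add0r intrD.
have -> : Num.min (Negz a + Posz k.+1) 0 - (N.+1)%:Z = - (a.+1)%:Z.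
  by rewrite NegzE; lia.
by rewrite mulrNz Hf mulr0.
Qed.

Lemma in_rideal_cons (g : gwa K) gs h : in_rideal alpha gs h -> in_rideal alpha (g :: gs) h.
Proof.
move=> [ss [Hsz Hss]]; exists ([::] :: ss); split; first by rewrite /= Hsz.
by move=> n; rewrite Hss /= gmul_nil.
Qed.

Lemma flatten_nil_zip (gs : seq (gwa K)) :
  flatten [seq gmul alpha rs.1 rs.2 | rs <- zip gs (nseq (size gs) [::])] = [::].
Proof. by elim: gs => //= g gs ->; rewrite gmul_nil. Qed.

Lemma in_rideal_head (t : int * {poly K}) gs : in_rideal alpha ([:: t] :: gs) [:: t].
Proof.
exists ([:: (0, 1)] :: nseq (size gs) [::]); split; first by rewrite /= size_nseq.
move=> n; rewrite /= flatten_nil_zip addr0 shiftp1 wcoef_0 !mulr1; case: t.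
by [].
Qed.

Lemma divXc (q : {poly K}) (c : K) : q.[- c] = 0 -> ('X + c%:P) * (q %/ ('X + c%:P)) = q.
Proof.
move=> Hq; have -> : 'X + c%:P = 'X - (- c)%:P by rewrite polyCN opprK.
by apply: divpKC; rewrite dvdp_XsubCl /root Hq.
Qed.

End Ideal.

Section Kill.
Variables (K : fieldType) (alpha : K) (V : zmodType) (e : int -> V) (mu : K).
Variable (sc : K -> V -> V).
Hypothesis sc0 : forall v, sc 0 v = 0.
Hypothesis scD : forall x y v, sc (x + y) v = sc x v + sc y v.

Definition killt (t : int * {poly K}) :=
  forall j q, sc (t.2 * shiftp t.1 q * wcoef alpha t.1 j).[mu] (e (t.1 + j)) = 0.

Lemma kill_gmul t s j : killt t -> sc (gcoef (gmul alpha [:: t] s) j).[mu] (e j) = 0.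
Proof.
move=> Ht; rewrite gmul_single; elim: s => [|u s IH] /=; first by rewrite gcoef_nil horner0 sc0.
rewrite gcoef_cons hornerD scD IH addr0; case: eqP => [<-|_]; first exact: Ht.
by rewrite horner0 sc0.
Qed.

Lemma rideal_K gens a : (forall g, g \in gens -> exists t, g = [:: t] /\ killt t) ->
  in_rideal alpha gens a -> forall j, sc (gcoef a j).[mu] (e j) = 0.
Proof.
move=> Hg [ss [_ Hss]] j; rewrite Hss {Hss}.
elim: gens ss Hg => [|g gs IH] [|s ss] Hg /=; rewrite ?gcoef_nil ?horner0 ?sc0 //.
rewrite gcoef_cat hornerD scD IH; last by move=> h hh; apply: Hg; rewrite in_cons hh orbT.
have [t [-> Ht]] := Hg g (mem_head _ _).
by rewrite kill_gmul // add0r.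
Qed.

End Kill.

Lemma nonpos_int (j : int) : j <= 0 -> exists m : nat, j = - m%:Z.
Proof. by case: j => [[|k]|k] // _; [exists 0%N | exists k.+1; rewrite NegzE]. Qed.
Lemma pos_int (j : int) : 0 < j -> exists k : nat, j = Posz k.+1.
Proof. by case: j => [[|k]|k] // _; exists k. Qed.

Lemma flat3 (K : fieldType) (alpha : K) (g1 g2 g3 s1 s2 s3 : gwa K) :
  flatten [seq gmul alpha rs.1 rs.2 | rs <- zip [:: g1; g2; g3] [:: s1; s2; s3]] =
  gmul alpha g1 s1 ++ (gmul alpha g2 s2 ++ (gmul alpha g3 s3 ++ [::])).
Proof. by []. Qed.

Lemma divX0 (K : fieldType) (q : {poly K}) : q.[0] = 0 -> 'X * (q %/ 'X) = q.
Proof. by move=> Hq; have := @divXc _ q 0; rewrite polyC0 addr0 oppr0; apply. Qed.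

Section Types.
Variables (K : fieldType) (alpha : K) (M : grmod alpha).
Local Notation V := (gV M).
Local Notation pv := (peval_op (@az _ _ M)).
Local Notation f := (fpol alpha).
Let zlin := @az_lin _ _ M.
Let xlin := @ax_lin _ _ M.
Let ylin := @ay_lin _ _ M.
Implicit Types a b : gwa K.

Local Notation kt u mu := (killt alpha (fun j => actw j u) mu (fun x (v : V) => x *: v)).

Lemma actwNn (m : nat) (u : V) : actw (- m%:Z) u = iter m (@ay _ _ M) u.
Proof. by case: m => [|m] //; rewrite -NegzE actwN. Qed.

Lemma kill_gzc c (u : V) : kt u (- c) (0, 'X + c%:P).
Proof. by move=> j q /=; rewrite !hornerM hornerD hornerX hornerC addNr !mul0r scale0r. Qed.

Lemma kill_gx mu (u : V) : ax u = 0 -> f.[mu] = 0 -> kt u mu (1, 1).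
Proof.
move=> Hx Hf [k|k] q /=.
  by rewrite addrC PoszD1 actwP iterSr Hx (giter0 xlin) scaler0.
by rewrite wcoef_1N hornerM Hf mulr0 scale0r.
Qed.

Lemma kill_gy mu (u : V) : ay u = 0 -> f.[mu - 1] = 0 -> kt u mu (-1, 1).
Proof.
move=> Hy Hf [[|k]|k] q /=.
- by rewrite addr0 -[-1]/(Negz 0) actwN /= Hy scaler0.
- by rewrite wcoef_N1P hornerM horner_shiftp Hf mulr0 scale0r.
- by rewrite addrC NegzB1 actwN iterSr Hy (giter0 ylin) scaler0.
Qed.

Lemma kill_gypow (a : nat) (u : V) : (0 < a)%N -> iter a (@ay _ _ M) u = 0 ->
  f.[- a%:R] = 0 -> kt u 0 (- a%:Z, 1).
Proof.
move=> a0 Hy Hf j q /=; case: (lerP j 0) => Hj.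
  have [m ->] := nonpos_int Hj.
  by rewrite -opprD -PoszD addnC actwNn iterD Hy (giter0 ylin) scaler0.
have [k ->] := pos_int Hj; case: a a0 Hy Hf => // a _ Hy Hf.
by rewrite -NegzE hornerM wcoef_NaP_eval // mulr0 scale0r.
Qed.

Lemma typeX c n (u : V) : gsimple M -> u <> 0 -> ghom n u -> az u = (- c) *: u ->
  ax u = 0 -> f.[- c] = 0 -> (forall i : nat, f.[- c - i%:R - 1] <> 0) ->
  iso_cyc M [:: gx K; gzc c] n.
Proof.
move=> Hs u0 Hu Hz Hx Hf Hnz; exists u; split => //; split; first exact: gen_all Hs Hu u0.
move=> a; rewrite (act_kernel a Hu Hz); split; last first.
  apply: (@rideal_K K alpha V (fun j => actw j u) (- c) (fun x v => x *: v)
            (@scale0r _ _) (fun x y v => scalerDl v x y)).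
  move=> g; rewrite !inE => /orP [] /eqP ->; eexists; (split; [reflexivity|]).
    exact: kill_gx.
  exact: kill_gzc.
move=> H.
have Hnz0 : forall j, j <= 0 -> (gcoef a j).[- c] = 0.
  move=> j /nonpos_int [m ->]; have := H (- m%:Z); rewrite actwNn => /eqP.
  rewrite scaler_eq0 => /orP [/eqP //|/eqP H0]; exfalso.
  by apply: (iter_ay_nz u0 Hz _ H0) => i _; apply: Hnz.
pose S := undup (map fst a).
exists [:: [seq (j - 1, shiftp (-1) (gcoef a j)) | j <- [seq j <- S | 0 < j]];
           [seq (j - 0, gcoef a j %/ ('X + c%:P)) | j <- [seq j <- S | j <= 0]]].
split => // n0; rewrite /= gcoef_cat gcoef_cat gcoef_nil addr0.
rewrite !gcoef_gmul_map ?filter_uniq ?undup_uniq // !mem_filter.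
case: (boolP (n0 \in S)) => nS; last first.
  by rewrite !andbF add0r gcoef_notin // -mem_undup.
rewrite !andbT; case: (ltrP 0 n0) => Hn.
  rewrite addr0 shiftpKV wcoef_pp ?mulr1 ?mul1r //; lia.
by rewrite add0r shiftp0 subr0 wcoef_nn // mulr1 divXc // Hnz0.
Qed.

Lemma typeY c n (u : V) : gsimple M -> u <> 0 -> ghom n u -> az u = (- c) *: u ->
  ay u = 0 -> f.[- c - 1] = 0 -> (forall i : nat, f.[- c + i%:R] <> 0) ->
  iso_cyc M [:: gy K; gzc c] n.
Proof.
move=> Hs u0 Hu Hz Hy Hf Hnz; exists u; split => //; split; first exact: gen_all Hs Hu u0.
move=> a; rewrite (act_kernel a Hu Hz); split; last first.
  apply: (@rideal_K K alpha V (fun j => actw j u) (- c) (fun x v => x *: v)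
            (@scale0r _ _) (fun x y v => scalerDl v x y)).
  move=> g; rewrite !inE => /orP [] /eqP ->; eexists; (split; [reflexivity|]).
    exact: kill_gy.
  exact: kill_gzc.
move=> H.
have Hnz0 : forall j, 0 <= j -> (gcoef a j).[- c] = 0.
  case=> [k|k] // _; have := H (Posz k); rewrite actwP => /eqP.
  rewrite scaler_eq0 => /orP [/eqP //|/eqP H0]; exfalso.
  by apply: (iter_ax_nz u0 Hz _ H0) => i _; apply: Hnz.
pose S := undup (map fst a).
exists [:: [seq (j - (-1), shiftp 1 (gcoef a j)) | j <- [seq j <- S | j < 0]];
           [seq (j - 0, gcoef a j %/ ('X + c%:P)) | j <- [seq j <- S | 0 <= j]]].
split => // n0; rewrite /= gcoef_cat gcoef_cat gcoef_nil addr0.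
rewrite !gcoef_gmul_map ?filter_uniq ?undup_uniq // !mem_filter.
case: (boolP (n0 \in S)) => nS; last first.
  by rewrite !andbF add0r gcoef_notin // -mem_undup.
rewrite !andbT; case: (ltrP n0 0) => Hn.
  rewrite addr0 shiftpK wcoef_nn ?mulr1 ?mul1r //; lia.
by rewrite add0r shiftp0 subr0 wcoef_pp // mulr1 divXc // Hnz0.
Qed.

Lemma typeZ (na : nat) n (u : V) : gsimple M -> (0 < na)%N -> u <> 0 -> ghom n u ->
  az u = 0 *: u -> ax u = 0 -> iter na (@ay _ _ M) u = 0 -> f.[0] = 0 ->
  f.[- na%:R] = 0 -> (forall i : nat, (i.+1 < na)%N -> f.[0 - i%:R - 1] <> 0) ->
  iso_cyc M [:: gypow K na; gx K; gzc 0] n.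
Proof.
move=> Hs na0 u0 Hu Hz Hx Hy Hf0 Hfa Hnz.
exists u; split => //; split; first exact: gen_all Hs Hu u0.
move=> a; rewrite (act_kernel a Hu Hz); split; last first.
  apply: (@rideal_K K alpha V (fun j => actw j u) 0 (fun x v => x *: v)
            (@scale0r _ _) (fun x y v => scalerDl v x y)).
  move=> g; rewrite !inE => /orP [/eqP ->|/orP [] /eqP ->]; eexists; (split; [reflexivity|]).
  - exact: kill_gypow.
  - exact: kill_gx.
  - by have := kill_gzc 0 u; rewrite oppr0.
move=> H.
have Hnz0 : forall j, - na%:Z < j -> j <= 0 -> (gcoef a j).[0] = 0.
  move=> j Hj1 /nonpos_int [m Hm]; rewrite Hm in Hj1 *.
  have Hma : (m < na)%N by lia.
  have := H (- m%:Z); rewrite actwNn => /eqP.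
  rewrite scaler_eq0 => /orP [/eqP //|/eqP H0]; exfalso.
  apply: (iter_ay_nz u0 Hz _ H0) => i Hi; apply: Hnz.
  exact: leq_ltn_trans Hi Hma.
pose S := undup (map fst a).
exists [:: [seq (j - (- na%:Z), shiftp na%:Z (gcoef a j)) | j <- [seq j <- S | j <= - na%:Z]];
           [seq (j - 1, shiftp (-1) (gcoef a j)) | j <- [seq j <- S | 0 < j]];
           [seq (j - 0, gcoef a j %/ ('X + 0%:P)) | j <- [seq j <- S | (- na%:Z < j) && (j <= 0)]]].
split => // n0; rewrite flat3 !gcoef_cat gcoef_nil addr0.
rewrite -!gmul_single !gcoef_gmul_map ?filter_uniq ?undup_uniq // !mem_filter.
case: (boolP (n0 \in S)) => nS; last first.
  by rewrite !andbF !add0r gcoef_notin // -mem_undup.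
rewrite !andbT; case: (lerP n0 (- na%:Z)) => H1.
  have -> : (0 < n0) = false by lia.
  rewrite /= ?addr0 ?add0r shiftpK wcoef_nn ?mulr1 ?mul1r //; lia.
case: (ltrP 0 n0) => H2 /=.
  rewrite ?addr0 ?add0r shiftpKV wcoef_pp ?mulr1 ?mul1r //; lia.
rewrite ?addr0 ?add0r shiftp0 wcoef_nn // mulr1 divX0 //.
by apply: Hnz0.
Qed.

Lemma typeM lam (u : V) : gsimple M -> u <> 0 -> ghom 0 u -> az u = (- lam) *: u ->
  (forall t : int, f.[- lam + t%:~R] <> 0) -> iso_cyc M [:: gzc lam] 0.
Proof.
move=> Hs u0 Hu Hz Hnz; exists u; split => //; split; first exact: gen_all Hs Hu u0.
move=> a; rewrite (act_kernel a Hu Hz); split; last first.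
  apply: (@rideal_K K alpha V (fun j => actw j u) (- lam) (fun x v => x *: v)
            (@scale0r _ _) (fun x y v => scalerDl v x y)).
  move=> g; rewrite !inE => /eqP ->; eexists; (split; [reflexivity|]).
  exact: kill_gzc.
move=> H.
have Hnz0 : forall j, (gcoef a j).[- lam] = 0.
  move=> j; have := H j => /eqP; rewrite scaler_eq0 => /orP [/eqP //|/eqP H0]; exfalso.
  case: j H0 => k H0.
    rewrite actwP in H0; apply: (iter_ax_nz u0 Hz _ H0) => i _.
    exact: (Hnz (Posz i)).
  rewrite actwN in H0; apply: (iter_ay_nz u0 Hz _ H0) => i _.
  have -> : - lam - i%:R - 1 = - lam + (Negz i)%:~R.
    rewrite NegzE mulrNz; have -> : ((i.+1)%:Z)%:~R = i.+1%:R :> K by []. by rewrite -natr1 opprD addrA.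
  exact: Hnz.
pose S := undup (map fst a).
exists [:: [seq (j - 0, gcoef a j %/ ('X + lam%:P)) | j <- S]].
split => // n0; rewrite /= gcoef_cat gcoef_nil addr0.
rewrite !gcoef_gmul_map ?undup_uniq //.
case: (boolP (n0 \in S)) => nS; last by rewrite gcoef_notin // -mem_undup.
rewrite shiftp0 subr0; have -> : wcoef alpha 0 n0 = 1 by case: (lerP 0 n0) => h; [rewrite wcoef_pp | rewrite wcoef_nn // ltW].
by rewrite mulr1 divXc // Hnz0.
Qed.

End Types.

Section Char0.
Variable K : fieldType.
Hypothesis hK : [pchar K] =i pred0.

Lemma intrK_eq0 (z : int) : (z%:~R == 0 :> K) = (z == 0).
Proof.
have H := (pcharf0P K).1 hK.
case: z => n; first by rewrite [_%:~R]/= H.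
by rewrite NegzE mulrNz oppr_eq0 [_%:~R]/= H.
Qed.

Lemma intrK_inj (x y : int) : (x%:~R : K) = y%:~R -> x = y.
Proof.
by move/eqP; rewrite -subr_eq0 -intrB intrK_eq0 subr_eq0 => /eqP.
Qed.

Lemma intrK_neq0 (z : int) : z != 0 -> (z%:~R : K) <> 0.
Proof. by move=> Hz /eqP; rewrite intrK_eq0 (negbTE Hz). Qed.

End Char0.

Section NotInt.
Variable K : fieldType.

Lemma notint_neq0 (x : K) : ~ is_intK x -> x <> 0.
Proof. by move=> H x0; apply: H; exists 0; rewrite x0. Qed.

Lemma notint_add (x : K) (z : int) : ~ is_intK x -> ~ is_intK (x + z%:~R).
Proof. by move=> H [w Hw]; apply: H; exists (w - z); rewrite intrB -Hw addrK. Qed.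

Lemma notint_opp (x : K) : ~ is_intK x -> ~ is_intK (- x).
Proof. by move=> H [w Hw]; apply: H; exists (- w); rewrite intrN -Hw opprK. Qed.

End NotInt.

Section Uniq.
Variables (K : fieldType) (alpha : K) (M : grmod alpha).
Local Notation V := (gV M).
Local Notation f := (fpol alpha).
Let zlin := @az_lin _ _ M.
Let xlin := @ax_lin _ _ M.
Let ylin := @ay_lin _ _ M.

Definition udata (m : V) (n : int) (mu : K) (xk yk : bool) :=
  ghom n m /\ m <> 0 /\ (forall v, exists a, v = act a m) /\ az m = mu *: m /\
      (xk -> ax m = 0) /\ (yk -> ay m = 0).

Lemma act_gx (m : V) : act (gx K) m = ax m.
Proof. by rewrite act_cons act_nil addr0 peval1. Qed.
Lemma act_gy (m : V) : act (gy K) m = ay m.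
Proof. by rewrite act_cons act_nil addr0 peval1. Qed.
Lemma act_gzc c (m : V) : act (gzc c) m = az m + c *: m.
Proof. by rewrite act_cons act_nil addr0 /= pevalD // pevalX // pevalC. Qed.

Lemma iso_udata gens n c (xk yk : bool) : gsimple M -> iso_cyc M gens n ->
  in_rideal alpha gens (gzc c) -> (xk -> in_rideal alpha gens (gx K)) ->
  (yk -> in_rideal alpha gens (gy K)) -> exists m, udata m n (- c) xk yk.
Proof.
move=> [[v0 v00] _] [m [Hm [Hsurj Hker]]] Hz Hx Hy; exists m; do !split => //.
- by move=> m0; have [a Ha] := Hsurj v0; apply: v00; rewrite Ha m0 act0.
- by move/Hker: Hz; rewrite act_gzc => /eqP; rewrite addr_eq0 -scaleNr => /eqP.
- by move=> /Hx /Hker; rewrite act_gx.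
- by move=> /Hy /Hker; rewrite act_gy.
Qed.

Lemma pair_compat (m1 m2 : V) n1 n2 mu1 mu2 xk1 yk1 xk2 yk2 :
  udata m1 n1 mu1 xk1 yk1 -> udata m2 n2 mu2 xk2 yk2 ->
  [/\ mu2 = mu1 + (n2 - n1)%:~R, actw (n2 - n1) m1 <> 0 & actw (n1 - n2) m2 <> 0].
Proof.
have one : forall (m1 m2 : V) n1 n2 mu1 mu2 xk1 yk1 xk2 yk2,
  udata m1 n1 mu1 xk1 yk1 -> udata m2 n2 mu2 xk2 yk2 ->
  mu2 = mu1 + (n2 - n1)%:~R /\ actw (n2 - n1) m1 <> 0.
  move=> m1' m2' n1' n2' mu1' mu2' ? ? ? ? [H1 [_ [S1 [Z1 _]]]] [H2 [N2 [_ [Z2 _]]]].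
  have [a Ha] := S1 m2'.
  have H2' : ghom (n1' + (n2' - n1')) m2' by rewrite addrC subrK.
  have := component H1 Ha H2'; rewrite (peval_eig zlin _ Z1).
  rewrite -(addr0 (_ *: m1')) actw_lin actw0 addr0 => E.
  have Ez := actw_eig (n2' - n1') Z1.
  have e0 : actw (n2' - n1') m1' <> 0 by move=> e0; apply: N2; rewrite E e0 scaler0.
  split => //.
  have : az m2' = (mu1' + (n2' - n1')%:~R) *: m2'.
    by rewrite E (glinZ zlin) Ez !scalerA mulrC.
  rewrite Z2 => /eqP; rewrite -subr_eq0 -scalerBl scaler_eq0 subr_eq0.
  by case/orP => /eqP // /N2.
move=> D1 D2; have [E1 A1] := one _ _ _ _ _ _ _ _ _ _ D1 D2.
by have [_ A2] := one _ _ _ _ _ _ _ _ _ _ D2 D1.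
Qed.

Lemma xkill_pos (m : V) j : ax m = 0 -> 0 < j -> actw j m = 0.
Proof.
move=> Hx /pos_int [k ->]; by rewrite actwP iterSr Hx (giter0 xlin).
Qed.
Lemma ykill_neg (m : V) j : ay m = 0 -> j < 0 -> actw j m = 0.
Proof.
by case: j => // k Hy _; rewrite actwN iterSr Hy (giter0 ylin).
Qed.

Lemma compat_full (m1 m2 : V) n1 n2 mu1 mu2 xk1 yk1 xk2 yk2 :
  udata m1 n1 mu1 xk1 yk1 -> udata m2 n2 mu2 xk2 yk2 ->
  [/\ ((n2 - n1)%:~R : K) = mu2 - mu1, (xk1 -> n2 <= n1), (yk1 -> n1 <= n2),
      (xk2 -> n1 <= n2) & (yk2 -> n2 <= n1)].
Proof.
move=> D1 D2; have [E A1 A2] := pair_compat D1 D2.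
case: D1 => _ [_ [_ [_ [X1 Y1]]]]; case: D2 => _ [_ [_ [_ [X2 Y2]]]].
split.
- by rewrite E; ring.
- move=> /X1 H; case: (lerP n2 n1) => // Hn; exfalso; apply: A1.
  by apply: xkill_pos => //; rewrite subr_gt0.
- move=> /Y1 H; case: (lerP n1 n2) => // Hn; exfalso; apply: A1.
  by apply: ykill_neg => //; rewrite subr_lt0.
- move=> /X2 H; case: (lerP n1 n2) => // Hn; exfalso; apply: A2.
  by apply: xkill_pos => //; rewrite subr_gt0.
- move=> /Y2 H; case: (lerP n2 n1) => // Hn; exfalso; apply: A2.
  by apply: ykill_neg => //; rewrite subr_lt0.
Qed.

End Uniq.

Lemma lin_solve (K : fieldType) (x y a b : K) : a = b -> x - y = a - b -> x = y.
Proof. by move=> -> /eqP; rewrite subrr subr_eq0 => /eqP. Qed.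
Lemma lin_solveN (K : fieldType) (x y a b : K) : a = b -> x - y = b - a -> x = y.
Proof. by move=> -> /eqP; rewrite subrr subr_eq0 => /eqP. Qed.

Section Move.
Variables (K : fieldType) (alpha : K) (M : grmod alpha).
Local Notation V := (gV M).
Local Notation f := (fpol alpha).

Lemma move_up d mu t (u : V) : u <> 0 -> ghom d u -> az u = mu *: u ->
  (forall i, (i < t)%N -> f.[mu + i%:R] <> 0) ->
  [/\ iter t (@ax _ _ M) u <> 0, ghom (d + t%:Z) (iter t (@ax _ _ M) u) &
      az (iter t (@ax _ _ M) u) = (mu + t%:R) *: iter t (@ax _ _ M) u].
Proof.
move=> u0 Hu Hz Hf; split; [exact: (iter_ax_nz u0 Hz Hf) | exact: iter_ax_hom | exact: az_iter_ax_eig].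
Qed.

Lemma move_down d mu t (u : V) : u <> 0 -> ghom d u -> az u = mu *: u ->
  (forall i, (i < t)%N -> f.[mu - i%:R - 1] <> 0) ->
  [/\ iter t (@ay _ _ M) u <> 0, ghom (d - t%:Z) (iter t (@ay _ _ M) u) &
      az (iter t (@ay _ _ M) u) = (mu - t%:R) *: iter t (@ay _ _ M) u].
Proof.
move=> u0 Hu Hz Hf; split; [exact: (iter_ay_nz u0 Hz Hf) | exact: iter_ay_hom | exact: az_iter_ay_eig].
Qed.

Lemma exist_M d mu (u : V) : gsimple M -> u <> 0 -> ghom d u -> az u = mu *: u ->
  (forall z : int, f.[mu + z%:~R] <> 0) -> iso_cyc M [:: gzc (d%:~R - mu)] 0.
Proof.
move=> Hs u0 Hu Hz Hf.
suff [u' [u'0 [Hu' Hz']]] : exists u' : V, u' <> 0 /\ ghom 0 u' /\ az u' = (mu - d%:~R) *: u'.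
  apply: (typeM Hs u'0 Hu'); first by rewrite Hz'; congr (_ *: _); ring.
  move=> z; have -> : - (d%:~R - mu) + z%:~R = mu + (z - d)%:~R by rewrite intrB; ring.
  exact: Hf.
case: d Hu => t Hu.
  have [] := @move_down _ mu t u u0 Hu Hz.
    move=> i _; have -> : mu - i%:R - 1 = mu + (Negz i)%:~R.
      rewrite NegzE mulrNz; have -> : ((i.+1)%:Z)%:~R = i.+1%:R :> K by [].
      by rewrite -natr1 opprD addrA.
    exact: Hf.
  by move=> A B C; exists (iter t (@ay _ _ M) u); rewrite subrr in B.
have [] := @move_up _ mu t.+1 u u0 Hu Hz.
  by move=> i _; exact: (Hf (Posz i)).
move=> A B C; exists (iter t.+1 (@ax _ _ M) u); split => //; split.
  by move: B; rewrite NegzE addNr.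
rewrite C; congr (_ *: _); rewrite NegzE mulrNz opprK; by [].
Qed.

End Move.

Lemma natr_intr (K : fieldType) (i : nat) : (i%:R : K) = (i%:Z)%:~R.
Proof. by []. Qed.

Ltac lsolve Hk := first [apply: (lin_solve Hk); ring | apply: (lin_solveN Hk); ring].

Section Fnz.
Variables (K : fieldType) (hK : [pchar K] =i pred0) (alpha : K).
Local Notation f := (fpol alpha).

Lemma f_nz_int (w z : int) : alpha = w%:~R -> z != 0 -> z + w != 0 -> f.[z%:~R] <> 0.
Proof.
move=> Ha z0 zw; rewrite horner_f Ha -intrD => /eqP; rewrite mulf_eq0 !(intrK_eq0 hK).
by rewrite (negbTE z0) (negbTE zw).
Qed.

Lemma f_nz_notint (x : K) : ~ is_intK x -> ~ is_intK (x + alpha) -> f.[x] <> 0.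
Proof.
move=> H1 H2; rewrite horner_f => /eqP; rewrite mulf_eq0 => /orP [] /eqP.
  exact: notint_neq0.
exact: notint_neq0.
Qed.

End Fnz.

Section Case1.
Variables (K : closedFieldType) (hK : [pchar K] =i pred0) (M : grmod (0 : K)).
Local Notation V := (gV M).
Local Notation f := (fpol (0 : K)).

Definition deg1 (l : lab1 K) : int := match l with L1X n => n | L1Y n => n + 1 | L1M _ => 0 end.
Definition eig1 (l : lab1 K) : K := match l with L1X _ => - 0 | L1Y _ => - (-1) | L1M lam => - lam end.
Definition xk1 (l : lab1 K) := if l is L1X _ then true else false.
Definition yk1 (l : lab1 K) := if l is L1Y _ then true else false.

Lemma data1 l : gsimple M -> iso1 M l -> exists m : V, udata m (deg1 l) (eig1 l) (xk1 l) (yk1 l).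
Proof.
case: l => [n|n|lam] /= Hs H; apply: (iso_udata Hs H) => //.
- exact: in_rideal_cons (in_rideal_head _ _ _).
- by move=> _; exact: in_rideal_head.
- exact: in_rideal_cons (in_rideal_head _ _ _).
- by move=> _; exact: in_rideal_head.
- exact: in_rideal_head.
Qed.

Lemma uniq1 l1 l2 : gsimple M -> valid1 l1 -> iso1 M l1 -> valid1 l2 -> iso1 M l2 -> l1 = l2.
Proof.
move=> Hs v1 i1 v2 i2.
have [m1 D1] := data1 Hs i1; have [m2 D2] := data1 Hs i2.
have [Hk X1 Y1 X2 Y2] := compat_full D1 D2.
case: l1 v1 i1 D1 Hk X1 Y1 X2 Y2 => [n1|n1|l1] v1 _ _ Hk X1 Y1 X2 Y2;
case: l2 v2 i2 D2 Hk X1 Y1 X2 Y2 => [n2|n2|l2] v2 _ _ /= Hk X1 Y1 X2 Y2.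
- have : n2 - n1 = 0 by apply: (intrK_inj hK); rewrite Hk; ring.
  by move=> E; congr L1X; lia.
- have : n2 + 1 - n1 = 1 by apply: (intrK_inj hK); rewrite Hk; ring.
  by move=> E; have := X1 isT; lia.
- by exfalso; apply: v2; exists n1; lsolve Hk.
- have : n2 - (n1 + 1) = -1 by apply: (intrK_inj hK); rewrite Hk; ring.
  by move=> E; have := Y1 isT; lia.
- have : n2 + 1 - (n1 + 1) = 0 by apply: (intrK_inj hK); rewrite Hk; ring.
  by move=> E; congr L1Y; lia.
- by exfalso; apply: v2; exists n1; lsolve Hk.
- by exfalso; apply: v1; exists n2; lsolve Hk.
- by exfalso; apply: v1; exists n2; lsolve Hk.
- by congr L1M; lsolve Hk.
Qed.

Lemma exist1 : gsimple M -> exists l, valid1 l /\ iso1 M l.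
Proof.
move=> Hs; have [u [d [mu [u0 [Hu Hz]]]]] := exists_eig Hs.
case: (classic (is_intK mu)) => [[k Hk]|Hnk]; last first.
  exists (L1M (d%:~R - mu)); split.
    move=> /= [w Hw]; apply: Hnk; exists (d - w); rewrite intrB -Hw; ring.
  apply: (exist_M Hs u0 Hu Hz) => z; apply: f_nz_notint.
    exact: notint_add.
  rewrite addr0; exact: notint_add.
case: (lerP k 0) => Hk0.
  have [t Ht] := nonpos_int Hk0.
  have HH : forall i, (i < t)%N -> f.[mu + i%:R] <> 0.
    move=> i Hi; have -> : mu + i%:R = (i%:Z - t%:Z)%:~R by rewrite Hk Ht; ring.
    by apply: (f_nz_int hK (w := 0)) => //; lia.
  have [A B C] := @move_up _ _ M d mu t u u0 Hu Hz HH.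
  have E : mu + t%:R = 0 by rewrite Hk Ht; ring.
  have Hx : ax (iter t (@ax _ _ M) u) = 0.
    by apply: (killx Hs A B C); rewrite E horner_f mul0r.
  exists (L1X K (d + t%:Z)); split => //=.
  apply: (typeX Hs A B) => //; first by rewrite C E oppr0.
    by rewrite oppr0 horner_f mul0r.
  move=> i; have -> : - 0 - i%:R - 1 = (- (i.+1)%:Z)%:~R :> K by ring.
  by apply: (f_nz_int hK (w := 0)) => //; lia.
have [t Ht] := pos_int Hk0.
have HH : forall i, (i < t)%N -> f.[mu - i%:R - 1] <> 0.
  move=> i Hi; have -> : mu - i%:R - 1 = (t%:Z - i%:Z)%:~R by rewrite Hk Ht; ring.
  by apply: (f_nz_int hK (w := 0)) => //; lia.
have [A B C] := @move_down _ _ M d mu t u u0 Hu Hz HH.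
have E : mu - t%:R = 1 by rewrite Hk Ht; ring.
have Hy : ay (iter t (@ay _ _ M) u) = 0.
  by apply: (killy Hs A B C); rewrite E subrr horner_f mul0r.
exists (L1Y K (d - t%:Z - 1)); split => //=.
have B' : ghom (d - t%:Z - 1 + 1) (iter t (@ay _ _ M) u) by rewrite subrK.
apply: (typeY Hs A B') => //; first by rewrite C E opprK.
  by rewrite opprK subrr horner_f mul0r.
move=> i; have -> : - -1 + i%:R = (i.+1%:Z)%:~R :> K by ring.
by apply: (f_nz_int hK (w := 0)) => //; lia.
Qed.

End Case1.

Ltac lsolve2 Hk := first [apply: (lin_solve Hk); ring | apply: (lin_solveN Hk); ring].
Ltac zeq hK Hk c := let E := fresh "E" in
  match type of Hk with ((?z)%:~R = _) =>
    have E : z = (c : int) by apply: (intrK_inj hK); rewrite Hk; ring end.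
Ltac ufin X1 Y1 X2 Y2 := first [ f_equal; lia |
  exfalso; (try have := X1 isT); (try have := Y1 isT); (try have := X2 isT);
  (try have := Y2 isT); lia ].

Ltac memb := (try move=> _); first [exact: in_rideal_head |
  apply: in_rideal_cons; exact: in_rideal_head |
  do 2 apply: in_rideal_cons; exact: in_rideal_head].

Section Case2.
Variables (K : closedFieldType) (hK : [pchar K] =i pred0) (a : nat) (a0 : (0 < a)%N).
Variable (M : grmod (a%:R : K)).
Local Notation V := (gV M).
Local Notation f := (fpol (a%:R : K)).

Definition deg2 (l : lab2 K) : int :=
  match l with L2X n => n - a%:Z | L2Y n => n + 1 | L2Z n => n | L2M _ => 0 end.
Definition eig2 (l : lab2 K) : K :=
  match l with L2X _ => - a%:R | L2Y _ => - (-1) | L2Z _ => - 0 | L2M lam => - lam end.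
Definition xk2 (l : lab2 K) := match l with L2X _ | L2Z _ => true | _ => false end.
Definition yk2 (l : lab2 K) := if l is L2Y _ then true else false.

Lemma data2 l : gsimple M -> iso2 M l -> exists m : V, udata m (deg2 l) (eig2 l) (xk2 l) (yk2 l).
Proof.
case: l => [n|n|n|lam] /= Hs H; apply: (iso_udata Hs H) => //; memb.
Qed.

Lemma uniq2 l1 l2 : gsimple M -> valid2 l1 -> iso2 M l1 -> valid2 l2 -> iso2 M l2 -> l1 = l2.
Proof.
move=> Hs v1 i1 v2 i2.
have [m1 D1] := data2 Hs i1; have [m2 D2] := data2 Hs i2.
have [Hk X1 Y1 X2 Y2] := compat_full D1 D2.
have aP : (0 < a%:Z) by lia.
case: l1 v1 i1 D1 Hk X1 Y1 X2 Y2 => [n1|n1|n1|l1] v1 _ _ Hk X1 Y1 X2 Y2;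
case: l2 v2 i2 D2 Hk X1 Y1 X2 Y2 => [n2|n2|n2|l2] v2 _ _ /= Hk X1 Y1 X2 Y2;
rewrite ?natr_intr in Hk.
- by zeq hK Hk (0 : int); ufin X1 Y1 X2 Y2.
- by zeq hK Hk ((1 + a%:Z) : int); ufin X1 Y1 X2 Y2.
- by zeq hK Hk ((a%:Z) : int); ufin X1 Y1 X2 Y2.
- by exfalso; apply: v2; exists n1; lsolve2 Hk.
- by zeq hK Hk ((- a%:Z - 1) : int); ufin X1 Y1 X2 Y2.
- by zeq hK Hk (0 : int); ufin X1 Y1 X2 Y2.
- by zeq hK Hk ((-1) : int); ufin X1 Y1 X2 Y2.
- by exfalso; apply: v2; exists n1; lsolve2 Hk.
- by zeq hK Hk ((- a%:Z) : int); ufin X1 Y1 X2 Y2.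
- by zeq hK Hk (1 : int); ufin X1 Y1 X2 Y2.
- by zeq hK Hk (0 : int); ufin X1 Y1 X2 Y2.
- by exfalso; apply: v2; exists n1; lsolve2 Hk.
- by exfalso; apply: v1; exists n2; lsolve2 Hk.
- by exfalso; apply: v1; exists n2; lsolve2 Hk.
- by exfalso; apply: v1; exists n2; lsolve2 Hk.
- by f_equal; lsolve2 Hk.
Qed.

Lemma exist2 : gsimple M -> exists l, valid2 l /\ iso2 M l.
Proof.
move=> Hs; have [u [d [mu [u0 [Hu Hz]]]]] := exists_eig Hs.
have Ha : (a%:R : K) = (a%:Z)%:~R by [].
case: (classic (is_intK mu)) => [[k Hk]|Hnk]; last first.
  exists (L2M (d%:~R - mu)); split.
    move=> /= [w Hw]; apply: Hnk; exists (d - w); rewrite intrB -Hw; ring.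
  apply: (exist_M Hs u0 Hu Hz) => z; apply: f_nz_notint.
    exact: notint_add.
  rewrite Ha -addrA -intrD; exact: notint_add.
case: (lerP k (- a%:Z)) => Hk1.
  have [t Ht] : exists t : nat, k = - (t%:Z + a%:Z) by exists `|- k - a%:Z|%N; lia.
  have HH : forall i, (i < t)%N -> f.[mu + i%:R] <> 0.
    move=> i Hi; have -> : mu + i%:R = (i%:Z - t%:Z - a%:Z)%:~R by rewrite Hk Ht; ring.
    by apply: (f_nz_int hK Ha) => //; lia.
  have [A B C] := @move_up _ _ M d mu t u u0 Hu Hz HH.
  have E : mu + t%:R = - a%:R by rewrite Hk Ht Ha; ring.
  have Hx : ax (iter t (@ax _ _ M) u) = 0.
    by apply: (killx Hs A B C); rewrite E horner_f addNr mulr0.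
  exists (L2X K (d + t%:Z + a%:Z)); split => //=.
  have B' : ghom (d + t%:Z + a%:Z - a%:Z) (iter t (@ax _ _ M) u) by rewrite addrK.
  apply: (typeX Hs A B') => //; first by rewrite C E.
    by rewrite horner_f addNr mulr0.
  move=> i; have -> : - a%:R - i%:R - 1 = (- (i.+1)%:Z - a%:Z)%:~R :> K by rewrite Ha; ring.
  by apply: (f_nz_int hK Ha) => //; lia.
case: (lerP k 0) => Hk0.
  have [t Ht] := nonpos_int Hk0.
  have HH : forall i, (i < t)%N -> f.[mu + i%:R] <> 0.
    move=> i Hi; have -> : mu + i%:R = (i%:Z - t%:Z)%:~R by rewrite Hk Ht; ring.
    by apply: (f_nz_int hK Ha) => //; lia.
  have [A B C] := @move_up _ _ M d mu t u u0 Hu Hz HH.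
  have E : mu + t%:R = 0 by rewrite Hk Ht; ring.
  have C' : az (iter t (@ax _ _ M) u) = 0 *: iter t (@ax _ _ M) u by rewrite C E.
  have Hf0 : f.[0] = 0 by rewrite horner_f mul0r.
  have Hfa : f.[- a%:R] = 0 by rewrite horner_f addNr mulr0.
  have Hx : ax (iter t (@ax _ _ M) u) = 0 by apply: (killx Hs A B C'); rewrite Hf0.
  have Hy := killZ Hs A B C' Hx Hfa a0.
  exists (L2Z K (d + t%:Z)); split => //=.
  apply: (typeZ Hs a0 A B C' Hx Hy Hf0 Hfa).
  move=> i Hi; have -> : 0 - i%:R - 1 = (- (i.+1)%:Z)%:~R :> K by ring.
  by apply: (f_nz_int hK Ha) => //; lia.
have [t Ht] := pos_int Hk0.
have HH : forall i, (i < t)%N -> f.[mu - i%:R - 1] <> 0.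
  move=> i Hi; have -> : mu - i%:R - 1 = (t%:Z - i%:Z)%:~R by rewrite Hk Ht; ring.
  by apply: (f_nz_int hK Ha) => //; lia.
have [A B C] := @move_down _ _ M d mu t u u0 Hu Hz HH.
have E : mu - t%:R = 1 by rewrite Hk Ht; ring.
have Hy : ay (iter t (@ay _ _ M) u) = 0.
  by apply: (killy Hs A B C); rewrite E subrr horner_f mul0r.
exists (L2Y K (d - t%:Z - 1)); split => //=.
have B' : ghom (d - t%:Z - 1 + 1) (iter t (@ay _ _ M) u) by rewrite subrK.
apply: (typeY Hs A B') => //; first by rewrite C E opprK.
  by rewrite opprK subrr horner_f mul0r.
move=> i; have -> : - -1 + i%:R = (i.+1%:Z)%:~R :> K by ring.
by apply: (f_nz_int hK Ha) => //; lia.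
Qed.

End Case2.

Section Case3.
Variables (K : closedFieldType) (hK : [pchar K] =i pred0) (alpha : K).
Hypothesis Hal : ~ is_intK alpha.
Variable (M : grmod alpha).
Local Notation V := (gV M).
Local Notation f := (fpol alpha).

Lemma f3_int (z : int) : z != 0 -> f.[z%:~R] <> 0.
Proof.
move=> z0; rewrite horner_f => /eqP; rewrite mulf_eq0 => /orP [].
  by rewrite (intrK_eq0 hK) (negbTE z0).
move=> /eqP H; apply: Hal; exists (- z); rewrite intrN; apply/eqP.
by rewrite -addr_eq0 addrC H.
Qed.

Lemma f3_shift (z : int) : z != 0 -> f.[z%:~R - alpha] <> 0.
Proof.
move=> z0; rewrite horner_f subrK => /eqP; rewrite mulf_eq0 => /orP [].
  move=> /eqP H; apply: Hal; exists z; apply/eqP; by rewrite eq_sym -subr_eq0 H.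
by rewrite (intrK_eq0 hK) (negbTE z0).
Qed.

Definition deg3 (l : lab3 K) : int :=
  match l with L3X0 n => n | L3Y0 n => n + 1 | L3Xa n => n | L3Ya n => n + 1 | L3M _ => 0 end.
Definition eig3 (l : lab3 K) : K :=
  match l with L3X0 _ => - 0 | L3Y0 _ => - (-1) | L3Xa _ => - alpha
  | L3Ya _ => - (alpha - 1) | L3M lam => - lam end.
Definition xk3 (l : lab3 K) := match l with L3X0 _ | L3Xa _ => true | _ => false end.
Definition yk3 (l : lab3 K) := match l with L3Y0 _ | L3Ya _ => true | _ => false end.

Lemma data3 l : gsimple M -> iso3 M l -> exists m : V, udata m (deg3 l) (eig3 l) (xk3 l) (yk3 l).
Proof. by case: l => [n|n|n|n|lam] /= Hs H; apply: (iso_udata Hs H) => //; memb. Qed.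

Lemma uniq3 l1 l2 : gsimple M -> valid3 alpha l1 -> iso3 M l1 -> valid3 alpha l2 -> iso3 M l2 -> l1 = l2.
Proof.
move=> Hs v1 i1 v2 i2.
have [m1 D1] := data3 Hs i1; have [m2 D2] := data3 Hs i2.
have [Hk X1 Y1 X2 Y2] := compat_full D1 D2.
case: l1 v1 i1 D1 Hk X1 Y1 X2 Y2 => [n1|n1|n1|n1|l1] v1 _ _ Hk X1 Y1 X2 Y2;
case: l2 v2 i2 D2 Hk X1 Y1 X2 Y2 => [n2|n2|n2|n2|l2] v2 _ _ /= Hk X1 Y1 X2 Y2.
- by zeq hK Hk (0 : int); ufin X1 Y1 X2 Y2.
- by zeq hK Hk (1 : int); ufin X1 Y1 X2 Y2.
- by exfalso; apply: Hal; exists (n1 - n2); lsolve2 Hk.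
- by exfalso; apply: Hal; exists (n1 - n2); lsolve2 Hk.
- by exfalso; case: v2 => v2 _; apply: v2; exists n1; lsolve2 Hk.
- by zeq hK Hk ((-1) : int); ufin X1 Y1 X2 Y2.
- by zeq hK Hk (0 : int); ufin X1 Y1 X2 Y2.
- by exfalso; apply: Hal; exists (n1 - n2); lsolve2 Hk.
- by exfalso; apply: Hal; exists (n1 - n2); lsolve2 Hk.
- by exfalso; case: v2 => v2 _; apply: v2; exists n1; lsolve2 Hk.
- by exfalso; apply: Hal; exists (n2 - n1); lsolve2 Hk.
- by exfalso; apply: Hal; exists (n2 - n1); lsolve2 Hk.
- by zeq hK Hk (0 : int); ufin X1 Y1 X2 Y2.
- by zeq hK Hk (1 : int); ufin X1 Y1 X2 Y2.
- by exfalso; case: v2 => _ v2; apply: v2; exists n1; lsolve2 Hk.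
- by exfalso; apply: Hal; exists (n2 - n1); lsolve2 Hk.
- by exfalso; apply: Hal; exists (n2 - n1); lsolve2 Hk.
- by zeq hK Hk ((-1) : int); ufin X1 Y1 X2 Y2.
- by zeq hK Hk (0 : int); ufin X1 Y1 X2 Y2.
- by exfalso; case: v2 => _ v2; apply: v2; exists n1; lsolve2 Hk.
- by exfalso; case: v1 => v1 _; apply: v1; exists n2; lsolve2 Hk.
- by exfalso; case: v1 => v1 _; apply: v1; exists n2; lsolve2 Hk.
- by exfalso; case: v1 => _ v1; apply: v1; exists n2; lsolve2 Hk.
- by exfalso; case: v1 => _ v1; apply: v1; exists n2; lsolve2 Hk.
- by f_equal; lsolve2 Hk.
Qed.

Lemma exist3 : gsimple M -> exists l, valid3 alpha l /\ iso3 M l.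
Proof.
move=> Hs; have [u [d [mu [u0 [Hu Hz]]]]] := exists_eig Hs.
case: (classic (is_intK mu)) => [[k Hk]|Hnk].
  case: (lerP k 0) => Hk0.
    have [t Ht] := nonpos_int Hk0.
    have HH : forall i, (i < t)%N -> f.[mu + i%:R] <> 0.
      move=> i Hi; have -> : mu + i%:R = (i%:Z - t%:Z)%:~R by rewrite Hk Ht; ring.
      by apply: f3_int; lia.
    have [A B C] := @move_up _ _ M d mu t u u0 Hu Hz HH.
    have E : mu + t%:R = 0 by rewrite Hk Ht; ring.
    have Hx : ax (iter t (@ax _ _ M) u) = 0.
      by apply: (killx Hs A B C); rewrite E horner_f mul0r.
    exists (L3X0 K (d + t%:Z)); split => //=.
    apply: (typeX Hs A B) => //; first by rewrite C E oppr0.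
      by rewrite oppr0 horner_f mul0r.
    move=> i; have -> : - 0 - i%:R - 1 = (- (i.+1)%:Z)%:~R :> K by ring.
    by apply: f3_int; lia.
  have [t Ht] := pos_int Hk0.
  have HH : forall i, (i < t)%N -> f.[mu - i%:R - 1] <> 0.
    move=> i Hi; have -> : mu - i%:R - 1 = (t%:Z - i%:Z)%:~R by rewrite Hk Ht; ring.
    by apply: f3_int; lia.
  have [A B C] := @move_down _ _ M d mu t u u0 Hu Hz HH.
  have E : mu - t%:R = 1 by rewrite Hk Ht; ring.
  have Hy : ay (iter t (@ay _ _ M) u) = 0.
    by apply: (killy Hs A B C); rewrite E subrr horner_f mul0r.
  exists (L3Y0 K (d - t%:Z - 1)); split => //=.
  have B' : ghom (d - t%:Z - 1 + 1) (iter t (@ay _ _ M) u) by rewrite subrK.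
  apply: (typeY Hs A B') => //; first by rewrite C E opprK.
    by rewrite opprK subrr horner_f mul0r.
  move=> i; have -> : - -1 + i%:R = (i.+1%:Z)%:~R :> K by ring.
  by apply: f3_int; lia.
case: (classic (is_intK (mu + alpha))) => [[k Hk]|Hnka].
  case: (lerP k 0) => Hk0.
    have [t Ht] := nonpos_int Hk0.
    have HH : forall i, (i < t)%N -> f.[mu + i%:R] <> 0.
      move=> i Hi; have -> : mu + i%:R = (i%:Z - t%:Z)%:~R - alpha.
        have -> : mu = k%:~R - alpha by rewrite -Hk; ring.
        by rewrite Ht; ring.
      by apply: f3_shift; lia.
    have [A B C] := @move_up _ _ M d mu t u u0 Hu Hz HH.
    have E : mu + t%:R = - alpha.
      have -> : mu = k%:~R - alpha by rewrite -Hk; ring.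
      by rewrite Ht; ring.
    have Hx : ax (iter t (@ax _ _ M) u) = 0.
      by apply: (killx Hs A B C); rewrite E horner_f addNr mulr0.
    exists (L3Xa K (d + t%:Z)); split => //=.
    apply: (typeX Hs A B) => //; first by rewrite C E.
      by rewrite horner_f addNr mulr0.
    move=> i; have -> : - alpha - i%:R - 1 = (- (i.+1)%:Z)%:~R - alpha :> K by ring.
    by apply: f3_shift; lia.
  have [t Ht] := pos_int Hk0.
  have HH : forall i, (i < t)%N -> f.[mu - i%:R - 1] <> 0.
    move=> i Hi; have -> : mu - i%:R - 1 = (t%:Z - i%:Z)%:~R - alpha.
      have -> : mu = k%:~R - alpha by rewrite -Hk; ring.
      by rewrite Ht; ring.
    by apply: f3_shift; lia.
  have [A B C] := @move_down _ _ M d mu t u u0 Hu Hz HH.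
  have E : mu - t%:R = - (alpha - 1).
    have -> : mu = k%:~R - alpha by rewrite -Hk; ring.
    by rewrite Ht; ring.
  have Hy : ay (iter t (@ay _ _ M) u) = 0.
    apply: (killy Hs A B C); rewrite E horner_f.
    by rewrite (_ : - (alpha - 1) - 1 + alpha = 0) ?mulr0 //; ring.
  exists (L3Ya K (d - t%:Z - 1)); split => //=.
  have B' : ghom (d - t%:Z - 1 + 1) (iter t (@ay _ _ M) u) by rewrite subrK.
  apply: (typeY Hs A B') => //; first by rewrite C E.
    by rewrite horner_f (_ : - (alpha - 1) - 1 + alpha = 0) ?mulr0 //; ring.
  move=> i; have -> : - (alpha - 1) + i%:R = (i.+1%:Z)%:~R - alpha :> K by ring.
  by apply: f3_shift; lia.
exists (L3M (d%:~R - mu)); split.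
  split.
    move=> /= [w Hw]; apply: Hnk; exists (d - w); rewrite intrB -Hw; ring.
  move=> /= [w Hw]; apply: Hnka; exists (d - w); rewrite intrB -Hw; ring.
apply: (exist_M Hs u0 Hu Hz) => z; apply: f_nz_notint.
  exact: notint_add.
rewrite (_ : mu + z%:~R + alpha = mu + alpha + z%:~R); last by ring.
exact: notint_add.
Qed.

End Case3.

Theorem lemma3p1 (K : closedFieldType) (hK : [pchar K] =i pred0) :
  (forall M : grmod (0 : K), gfg M -> gsimple M ->
     exists! l : lab1 K, valid1 l /\ iso1 M l) /\
  (forall a : nat, (0 < a)%N -> forall M : grmod (a%:R : K), gfg M -> gsimple M ->
     exists! l : lab2 K, valid2 l /\ iso2 M l) /\
  (forall alpha : K, ~ is_intK alpha -> forall M : grmod alpha, gfg M -> gsimple M ->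
     exists! l : lab3 K, valid3 alpha l /\ iso3 M l).
Proof.
split; [|split].
- move=> M _ Hs; have [l [v i]] := exist1 hK Hs; exists l; split; first by split.
  by move=> l' [v' i']; have := uniq1 hK Hs v i v' i'.
- move=> a a0 M _ Hs; have [l [v i]] := exist2 hK a0 Hs; exists l; split; first by split.
  by move=> l' [v' i']; have := uniq2 hK a0 Hs v i v' i'.
- move=> alpha Hal M _ Hs; have [l [v i]] := exist3 hK Hal Hs; exists l; split; first by split.
  by move=> l' [v' i']; have := uniq3 hK Hal Hs v i v' i'.
Qed.
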